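(* Assume the setting below, including A1–A4, with any step size $\alpha>0$. Let $\Psi(x)=\Phi(x)-\Phi^*+\frac{1}{2\alpha}d^2(x,\mathcal{X})$. Then for every $k\ge0$, $$\Psi(x_{k+1})\le\left(1-\frac{\alpha\beta}{1+\alpha\beta}\right)\Psi(x_k)-\frac{1}{2\alpha}\|x_{k+1}-x_k\|^2+\frac{L(\tau+1)}{2}\sum_{j=k-\tau}^{k}\|x_{j+1}-x_j\|^2 .$$
   Context: Problem: minimize $\Phi(x)=F(x)+h(x)$ over $x\in\mathbb{R}^d$, where $F(x)=\sum_{n=1}^N f_n(x)$. Assumption A1: each $f_n:\mathbb{R}^d\to\mathbb{R}$ is convex and differentiable with $\|\nabla f_n(x)-\nabla f_n(y)\|\le L_n\|x-y\|$ for all $x,y$; set $L=\sum_{n=1}^N L_n$. Assumption A2: $h:\mathbb{R}^d\to(-\infty,\infty]$ is proper, closed, convex, and $\partial h(x)\neq\emptyset$ for all $x$ in its effective domain. Assumption A3: the delays $\tau_k^n$ ($k\ge0$, $n=1,\dots,N$) are integers with $\tau_k^n\in\{0,1,\dots,\tau\}$ for a fixed nonnegative integer $\tau$ (the delay parameter). Assumption A4 (quadratic growth): the set $\mathcal{X}$ of minimizers of $\Phi$ is nonempty, $\Phi^*$ denotes the minimal value of $\Phi$, and there is $\beta>0$ with $\Phi(x)-\Phi^*\ge\frac{\beta}{2}d^2(x,\mathcal{X})$ for all $x\in\mathbb{R}^d$, where $d(x,\mathcal{X})=\inf_{y\in\mathcal{X}}\|x-y\|$. PIAG method: given $x_0\in\mathbb{R}^d$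 and step size $\alpha>0$, with the convention $x_j=x_0$ for $j<0$, for $k\ge0$ set $g_k=\sum_{n=1}^N\nabla f_n(x_{k-\tau_k^n})$ and $$x_{k+1}=\arg\min_{x\in\mathbb{R}^d}\Big\{h(x)+\langle g_k,x-x_k\rangle+\frac{1}{2\alpha}\|x-x_k\|^2\Big\}.$$ In particular $\|x_{j+1}-x_j\|=0$ for $j<0$. *)

(* Defs.v *)
From Stdlib Require Fin.
From Stdlib Require Import Reals Lra ClassicalEpsilon.
Open Scope R_scope.

Definition vec (d : nat) := Fin.t d -> R.

Fixpoint fsum (d : nat) : (Fin.t d -> R) -> R :=
  match d with
  | O => fun _ => 0
  | S d' => fun f => f Fin.F1 + fsum d' (fun i => f (Fin.FS i))
  end.

Definition vadd {d} (x y : vec d) : vec d := fun i => x i + y i.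
Definition vsub {d} (x y : vec d) : vec d := fun i => x i - y i.
Definition vscale {d} (t : R) (x : vec d) : vec d := fun i => t * x i.
Definition inner {d} (x y : vec d) : R := fsum d (fun i => x i * y i).
Definition norm {d} (x : vec d) : R := sqrt (inner x x).

Fixpoint sumR (N : nat) (a : nat -> R) : R :=
  match N with
  | O => 0
  | S N' => sumR N' a + a N'
  end.

Definition vsum {d} (N : nat) (v : nat -> vec d) : vec d :=
  fun i => sumR N (fun n => v n i).

Definition is_gradient {d} (f : vec d -> R) (g : vec d -> vec d) : Prop :=
  forall x eps, 0 < eps -> exists delta, 0 < delta /\
    forall y, norm (vsub y x) < delta ->
      Rabs (f y - f x - inner (g x) (vsub y x)) <= eps * norm (vsub y x).

Definition convex_fun {d} (f : vec d -> R) : Prop :=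
  forall x y t, 0 <= t <= 1 ->
    f (vadd (vscale t x) (vscale (1 - t) y)) <= t * f x + (1 - t) * f y.

(* An extended-valued h : R^d -> (-oo, +oo] is represented by its effective
   domain dom and its (real) values hv on dom; h = +oo outside dom. *)
Definition proper_h {d} (dom : vec d -> Prop) : Prop := exists x, dom x.

Definition convex_ext {d} (dom : vec d -> Prop) (hv : vec d -> R) : Prop :=
  forall x y t, dom x -> dom y -> 0 <= t <= 1 ->
    dom (vadd (vscale t x) (vscale (1 - t) y)) /\
    hv (vadd (vscale t x) (vscale (1 - t) y)) <= t * hv x + (1 - t) * hv y.

Definition converges {d} (u : nat -> vec d) (x : vec d) : Prop :=
  forall eps, 0 < eps -> exists K, forall k, (K <= k)%nat -> norm (vsub (u k) x) < eps.

(* closed = epigraph {(x,t) | x in dom, hv x <= t} is closed *)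
Definition closed_ext {d} (dom : vec d -> Prop) (hv : vec d -> R) : Prop :=
  forall (u : nat -> vec d) (t : nat -> R) (x : vec d) (s : R),
    (forall k, dom (u k) /\ hv (u k) <= t k) ->
    converges u x -> Un_cv t s -> dom x /\ hv x <= s.

Definition subdiff_nonempty {d} (dom : vec d -> Prop) (hv : vec d -> R) : Prop :=
  forall x, dom x -> exists g : vec d,
    forall y, dom y -> hv x + inner g (vsub y x) <= hv y.

Definition FF {d} (N : nat) (f : nat -> vec d -> R) (x : vec d) : R :=
  sumR N (fun n => f n x).
Definition Phi {d} (N : nat) (f : nat -> vec d -> R) (hv : vec d -> R) (x : vec d) : R :=
  FF N f x + hv x.

Definition Xset {d} (N : nat) (f : nat -> vec d -> R) (dom : vec d -> Prop)
  (hv : vec d -> R) (Phistar : R) : vec d -> Prop :=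
  fun y => dom y /\ Phi N f hv y = Phistar.

Definition is_inf (E : R -> Prop) (m : R) : Prop :=
  (forall r, E r -> m <= r) /\ (forall m', (forall r, E r -> m' <= r) -> m' <= m).

Definition dist_set {d} (X : vec d -> Prop) (x : vec d) : R :=
  epsilon (inhabits 0) (fun m => is_inf (fun r => exists y, X y /\ r = norm (vsub x y)) m).

Definition Psi {d} (N : nat) (f : nat -> vec d -> R) (dom : vec d -> Prop)
  (hv : vec d -> R) (Phistar alpha : R) (x : vec d) : R :=
  Phi N f hv x - Phistar + / (2 * alpha) * (dist_set (Xset N f dom hv Phistar) x) ^ 2.

Definition is_argmin {d} (dom : vec d -> Prop) (obj : vec d -> R) (z : vec d) : Prop :=
  dom z /\ forall y, dom y -> obj z <= obj y.

(* PIAG step k: x (S k) = argmin { h(y) + <g_k, y - x_k> + 1/(2 alpha) ||y - x_k||^2 },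
   g_k = sum_n grad f_n (x_{k - tau_k^n}); nat subtraction realizes x_j = x_0 for j < 0. *)
Definition piag_step {d} (N : nat) (gf : nat -> vec d -> vec d) (delay : nat -> nat -> nat)
  (dom : vec d -> Prop) (hv : vec d -> R) (alpha : R) (x : nat -> vec d) (k : nat) : Prop :=
  let gk := vsum N (fun n => gf n (x (k - delay k n)%nat)) in
  is_argmin dom
    (fun y => hv y + inner gk (vsub y (x k)) + / (2 * alpha) * (norm (vsub y (x k))) ^ 2)
    (x (S k)).

(* Main.v *)
Require Import Defs.
From Stdlib Require Import Reals Lra Psatz ClassicalEpsilon FunctionalExtensionality Arith Lia.
Open Scope R_scope.

Lemma fsum_ext d (f g : Fin.t d -> R) : (forall i, f i = g i) -> fsum d f = fsum d g.
Proof. revert f g; induction d; intros f g H; simpl; auto. rewrite H, (IHd _ (fun i => g (Fin.FS i))); auto. Qed.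

Lemma fsum_add d (f g : Fin.t d -> R) : fsum d (fun i => f i + g i) = fsum d f + fsum d g.
Proof. revert f g; induction d; intros f g; simpl. lra. rewrite (IHd (fun i => f (Fin.FS i)) (fun i => g (Fin.FS i))). lra. Qed.

Lemma fsum_scal d (f : Fin.t d -> R) c : fsum d (fun i => c * f i) = c * fsum d f.
Proof. revert f; induction d; intros f; simpl. lra. rewrite (IHd (fun i => f (Fin.FS i))). lra. Qed.

Lemma fsum_le d (f g : Fin.t d -> R) : (forall i, f i <= g i) -> fsum d f <= fsum d g.
Proof. revert f g; induction d; intros f g H; simpl. lra. specialize (IHd (fun i => f (Fin.FS i)) (fun i => g (Fin.FS i))). assert (fsum d (fun i => f (Fin.FS i)) <= fsum d (fun i => g (Fin.FS i))) by (apply IHd; intros; auto). specialize (H Fin.F1). lra. Qed.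

Lemma fsum_nonneg d (f : Fin.t d -> R) : (forall i, 0 <= f i) -> 0 <= fsum d f.
Proof. revert f; induction d; intros f H; simpl. lra. pose proof (H Fin.F1). pose proof (IHd (fun i => f (Fin.FS i)) (fun i => H _)). lra. Qed.

Lemma fsum_cs d (a b : Fin.t d -> R) :
  (fsum d (fun i => a i * b i))^2 <= fsum d (fun i => a i * a i) * fsum d (fun i => b i * b i).
Proof.
  revert a b; induction d; intros a b; simpl. lra.
  specialize (IHd (fun i => a (Fin.FS i)) (fun i => b (Fin.FS i))).
  set (A := fsum d (fun i => a (Fin.FS i) * b (Fin.FS i))) in *.
  set (P := fsum d (fun i => a (Fin.FS i) * a (Fin.FS i))) in *.
  set (Q := fsum d (fun i => b (Fin.FS i) * b (Fin.FS i))) in *.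
  assert (HP : 0 <= P) by (apply fsum_nonneg; intros; nra).
  assert (HQ : 0 <= Q) by (apply fsum_nonneg; intros; nra).
  set (u := a Fin.F1) in *. set (v := b Fin.F1) in *.
  assert (H1 : 2 * A * u * v <= P * v * v + Q * u * u).
  { assert (X0 : 0 <= P * v * v + Q * u * u) by nra.
    assert (X2 : (2*A*u*v)^2 <= (P * v * v + Q * u * u)^2).
    { assert ((P * v * v + Q * u * u)^2 - 4*P*Q*(u*v)^2 = (P*v*v - Q*u*u)^2) by ring.
      assert (0 <= (u*v)^2) by apply pow2_ge_0.
      assert (0 <= (P*v*v - Q*u*u)^2) by apply pow2_ge_0.
      assert ((2*A*u*v)^2 = 4 * A^2 * (u*v)^2) by ring.
      assert (A^2 * (u*v)^2 <= P*Q*(u*v)^2) by (apply Rmult_le_compat_r; lra).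
      lra. }
    destruct (Rle_dec (2*A*u*v) 0). lra.
    destruct (Rle_dec (2*A*u*v) (P * v * v + Q * u * u)); auto.
    assert ((P * v * v + Q * u * u)^2 < (2*A*u*v)^2).
    { simpl. apply Rmult_le_0_lt_compat; lra. } lra. }
  nra.
Qed.

Lemma fsum_0 d : fsum d (fun _ => 0) = 0.
Proof. rewrite (fsum_ext d (fun _ => 0) (fun _ => 0 * 0)) by (intros; ring). rewrite fsum_scal. ring. Qed.

Lemma fsum_opp d (f : Fin.t d -> R) : fsum d (fun i => - f i) = - fsum d f.
Proof. rewrite (fsum_ext d (fun i => - f i) (fun i => -1 * f i)) by (intros; ring). rewrite fsum_scal. ring. Qed.

Lemma inner_sym d (x y : vec d) : inner x y = inner y x.
Proof. unfold inner; apply fsum_ext; intros; ring. Qed.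

Lemma inner_add_l d (x y z : vec d) : inner (vadd x y) z = inner x z + inner y z.
Proof. unfold inner, vadd. rewrite <- fsum_add. apply fsum_ext; intros; ring. Qed.

Lemma inner_sub_l d (x y z : vec d) : inner (vsub x y) z = inner x z - inner y z.
Proof. unfold inner, vsub. unfold Rminus at 2. rewrite <- fsum_opp, <- fsum_add. apply fsum_ext; intros; ring. Qed.

Lemma inner_scale_l d t (x z : vec d) : inner (vscale t x) z = t * inner x z.
Proof. unfold inner, vscale. rewrite <- fsum_scal. apply fsum_ext; intros; ring. Qed.

Lemma inner_add_r d (x y z : vec d) : inner z (vadd x y) = inner z x + inner z y.
Proof. rewrite !(inner_sym d z). apply inner_add_l. Qed.
Lemma inner_sub_r d (x y z : vec d) : inner z (vsub x y) = inner z x - inner z y.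
Proof. rewrite !(inner_sym d z). apply inner_sub_l. Qed.
Lemma inner_scale_r d t (x z : vec d) : inner z (vscale t x) = t * inner z x.
Proof. rewrite !(inner_sym d z). apply inner_scale_l. Qed.

Lemma inner_self_ge0 d (x : vec d) : 0 <= inner x x.
Proof. unfold inner; apply fsum_nonneg; intros; nra. Qed.

Lemma norm_ge0 d (x : vec d) : 0 <= norm x.
Proof. unfold norm; apply sqrt_pos. Qed.

Lemma norm_sq d (x : vec d) : norm x ^ 2 = inner x x.
Proof. unfold norm. rewrite pow2_sqrt; auto using inner_self_ge0. Qed.

Lemma cs_abs d (x y : vec d) : Rabs (inner x y) <= norm x * norm y.
Proof.
  pose proof (fsum_cs d x y) as H. fold (inner x y) in H.
  assert (H2 : inner x y ^ 2 <= inner x x * inner y y) by exact H.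
  unfold norm. rewrite <- sqrt_mult by apply inner_self_ge0.
  rewrite <- (sqrt_pow2 (Rabs (inner x y))) by apply Rabs_pos.
  apply sqrt_le_1_alt. rewrite pow2_abs. exact H2.
Qed.

Lemma cs d (x y : vec d) : inner x y <= norm x * norm y.
Proof. pose proof (cs_abs d x y). pose proof (Rle_abs (inner x y)). lra. Qed.

Lemma norm_scale d t (x : vec d) : norm (vscale t x) = Rabs t * norm x.
Proof.
  unfold norm. rewrite inner_scale_l, inner_scale_r.
  rewrite <- Rmult_assoc, sqrt_mult by (try apply inner_self_ge0; nra).
  f_equal. rewrite <- (sqrt_Rsqr_abs t). unfold Rsqr. auto.
Qed.

Lemma norm_triangle d (x y : vec d) : norm (vadd x y) <= norm x + norm y.
Proof.
  pose proof (norm_ge0 d x). pose proof (norm_ge0 d y). pose proof (norm_ge0 d (vadd x y)).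
  assert (norm (vadd x y) ^2 <= (norm x + norm y)^2).
  { rewrite norm_sq, inner_add_l, !inner_add_r.
    replace ((norm x + norm y)^2) with (norm x ^2 + norm y ^ 2 + 2 * (norm x * norm y)) by ring.
    rewrite !norm_sq. pose proof (cs d x y). rewrite (inner_sym d y x). lra. }
  destruct (Rle_dec (norm (vadd x y)) (norm x + norm y)); auto.
  assert ((norm x + norm y)^2 < norm (vadd x y) ^2). { simpl. apply Rmult_le_0_lt_compat; lra. }
  lra.
Qed.

Lemma vsub_sym_norm d (x y : vec d) : norm (vsub x y) = norm (vsub y x).
Proof. unfold norm. f_equal. rewrite !inner_sub_l, !inner_sub_r. rewrite (inner_sym d x y). ring. Qed.

Lemma vsub_split d (a b c : vec d) : vsub a c = vadd (vsub a b) (vsub b c).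
Proof. apply functional_extensionality; intro i; unfold vsub, vadd; ring. Qed.

Lemma grad_convex d (f : vec d -> R) g : convex_fun f -> is_gradient f g ->
  forall z y, f z + inner (g z) (vsub y z) <= f y.
Proof.
  intros Hc Hg z y. set (v := vsub y z). set (D := f y - f z - inner (g z) v).
  destruct (Rle_dec 0 D) as [HD|HD]; [unfold D in HD; lra|]. apply Rnot_le_lt in HD.
  pose proof (norm_ge0 d v) as Hnv. set (nv := norm v) in *.
  set (eps := -D/(2*(nv+1))).
  assert (Heps : 0 < eps) by (unfold eps; apply Rdiv_lt_0_compat; lra).
  destruct (Hg z eps Heps) as [dl [Hdl H]].
  set (t := Rmin 1 (dl/(2*(nv + 1)))).
  assert (Ht0 : 0 < t) by (unfold t; apply Rmin_pos; [lra| apply Rdiv_lt_0_compat; lra]).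
  assert (Ht1 : t <= 1) by apply Rmin_l.
  assert (Ht2 : t <= dl/(2*(nv + 1))) by apply Rmin_r.
  set (w := vadd (vscale t y) (vscale (1-t) z)).
  assert (Hw : vsub w z = vscale t v).
  { apply functional_extensionality; intro i; unfold w, v, vsub, vadd, vscale; ring. }
  assert (Hcv : f w <= t * f y + (1-t) * f z) by (apply Hc; lra).
  assert (Hn : norm (vsub w z) = t * nv).
  { rewrite Hw, norm_scale, Rabs_right by lra. reflexivity. }
  assert (Hlt : norm (vsub w z) < dl).
  { rewrite Hn. assert (t * (2*(nv+1)) <= dl).
    { apply (Rmult_le_compat_r (2*(nv+1))) in Ht2; [|lra].
      unfold Rdiv in Ht2. rewrite Rmult_assoc, Rinv_l in Ht2 by lra. lra. }
    nra. }
  specialize (H w Hlt). rewrite Hn, Hw, inner_scale_r in H. fold v in H.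
  pose proof (Rle_abs (- (f w - f z - t * inner (g z) v))) as Ha. rewrite Rabs_Ropp in Ha.
  assert (Hk : t * D >= - (eps * (t * nv))) by (unfold D; lra).
  assert (Hk2 : D >= - (eps * nv)).
  { apply Rle_ge. apply (Rmult_le_reg_l t); auto. lra. }
  assert (eps * nv * (2*(nv+1)) = -D * nv).
  { unfold eps. field. lra. }
  nra.
Qed.

Lemma phi_deriv d (f : vec d -> R) g : is_gradient f g -> forall x v t,
  derivable_pt_lim (fun s => f (vadd x (vscale s v))) t (inner (g (vadd x (vscale t v))) v).
Proof.
  intros Hg x v t eps Heps.
  pose proof (norm_ge0 d v) as Hnv. set (nv := norm v) in *.
  set (p := vadd x (vscale t v)).
  set (e' := eps / (2*(nv+1))).
  assert (He' : 0 < e') by (unfold e'; apply Rdiv_lt_0_compat; lra).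
  destruct (Hg p e' He') as [dl [Hdl H]].
  assert (Hdp : 0 < dl/(nv+1)) by (apply Rdiv_lt_0_compat; lra).
  exists (mkposreal _ Hdp). simpl. intros h Hh Hhd.
  assert (Hw : vsub (vadd x (vscale (t+h) v)) p = vscale h v).
  { apply functional_extensionality; intro i; unfold p, vsub, vadd, vscale; ring. }
  assert (Hn : norm (vsub (vadd x (vscale (t+h) v)) p) = Rabs h * nv).
  { rewrite Hw, norm_scale. reflexivity. }
  pose proof (Rabs_pos h) as Hah.
  assert (Hlt : norm (vsub (vadd x (vscale (t+h) v)) p) < dl).
  { rewrite Hn. assert (Rabs h * (nv+1) < dl).
    { apply (Rmult_lt_compat_r (nv+1)) in Hhd; [|lra].
      unfold Rdiv in Hhd. rewrite Rmult_assoc, Rinv_l in Hhd by lra. lra. }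
    nra. }
  specialize (H _ Hlt). rewrite Hn, Hw, inner_scale_r in H.
  fold p. 
  assert (Heq : (f (vadd x (vscale (t + h) v)) - f p) / h - inner (g p) v
     = (f (vadd x (vscale (t + h) v)) - f p - h * inner (g p) v) / h) by (field; auto).
  rewrite Heq. unfold Rdiv. rewrite Rabs_mult, Rabs_inv.
  assert (Hah' : 0 < Rabs h) by (apply Rabs_pos_lt; auto).
  apply (Rmult_lt_reg_r (Rabs h)); auto. rewrite Rmult_assoc, Rinv_l, Rmult_1_r by lra.
  assert (e' * (Rabs h * nv) < eps * Rabs h).
  { assert (e' * nv < eps). { assert (e' * (2*(nv+1)) = eps) by (unfold e'; field; lra). nra. }
    nra. }
  lra.
Qed.

Lemma descent d (f : vec d -> R) g L : is_gradient f g ->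
  (forall y z, norm (vsub (g y) (g z)) <= L * norm (vsub y z)) ->
  forall x y, f y <= f x + inner (g x) (vsub y x) + L/2 * norm (vsub y x)^2.
Proof.
  intros Hg HL x y. set (v := vsub y x).
  set (c1 := inner (g x) v). set (c2 := L/2 * norm v ^ 2).
  set (psi := fun s => f (vadd x (vscale s v)) - (c1 * s + c2 * s^2)).
  set (psi' := fun s => inner (g (vadd x (vscale s v))) v - (c1 * 1 + c2 * (INR 2 * s ^ 1))).
  assert (Hd : forall s, 0 <= s <= 1 -> derivable_pt_lim psi s (psi' s)).
  { intros s _. unfold psi, psi'.
    apply (derivable_pt_lim_minus (fun s => f (vadd x (vscale s v))) (fun s => c1 * s + c2 * s^2)).
    - apply phi_deriv; auto.
    - apply (derivable_pt_lim_plus (fun s => c1 * s) (fun s => c2 * s^2)).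
      + apply (derivable_pt_lim_scal (fun s => s)). apply derivable_pt_lim_id.
      + apply (derivable_pt_lim_scal (fun s => s^2)). apply (derivable_pt_lim_pow s 2). }
  destruct (MVT_cor2 psi psi' 0 1 Rlt_0_1 Hd) as [c [Hc Hc01]].
  assert (Hy : vadd x (vscale 1 v) = y).
  { apply functional_extensionality; intro i; unfold v, vsub, vadd, vscale; ring. }
  assert (Hx : vadd x (vscale 0 v) = x).
  { apply functional_extensionality; intro i; unfold v, vsub, vadd, vscale; ring. }
  unfold psi in Hc. rewrite Hy, Hx in Hc.
  assert (Hle : psi' c <= 0).
  { unfold psi'. 
    assert (E : inner (g (vadd x (vscale c v))) v - c1 = inner (vsub (g (vadd x (vscale c v))) (g x)) v)
      by (unfold c1; rewrite inner_sub_l; ring).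
    pose proof (cs _ (vsub (g (vadd x (vscale c v))) (g x)) v) as Hcs.
    pose proof (HL (vadd x (vscale c v)) x) as HL1.
    assert (Hw : vsub (vadd x (vscale c v)) x = vscale c v).
    { apply functional_extensionality; intro i; unfold vsub, vadd, vscale; ring. }
    rewrite Hw, norm_scale, Rabs_right in HL1 by lra.
    pose proof (norm_ge0 d v).
    assert (norm (vsub (g (vadd x (vscale c v))) (g x)) * norm v <= L * (c * norm v) * norm v)
      by (apply Rmult_le_compat_r; auto).
    unfold c2. simpl (INR 2). simpl. lra. }
  fold v c1 c2. nra.
Qed.

Lemma lim_arg A B : (forall t, 0 < t <= 1 -> 0 <= t*A + t*t*B) -> 0 <= A.
Proof.
  intros H. destruct (Rle_dec 0 A) as [|HA]; auto. apply Rnot_le_lt in HA.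
  pose proof (Rabs_pos B).
  set (t := Rmin 1 (-A/(2*(Rabs B+1)))).
  assert (Ht0 : 0 < t) by (unfold t; apply Rmin_pos; [lra| apply Rdiv_lt_0_compat; lra]).
  assert (Ht1 : t <= 1) by apply Rmin_l.
  assert (Ht2 : t <= -A/(2*(Rabs B + 1))) by apply Rmin_r.
  assert (Ht3 : t * (2*(Rabs B+1)) <= -A).
  { apply (Rmult_le_compat_r (2*(Rabs B+1))) in Ht2; [|lra].
    unfold Rdiv in Ht2. rewrite Rmult_assoc, Rinv_l in Ht2 by lra. lra. }
  specialize (H t (conj Ht0 Ht1)).
  assert (0 <= A + t*B) by (apply (Rmult_le_reg_l t); auto; lra).
  pose proof (Rle_abs B). assert (t * B <= t * Rabs B) by (apply Rmult_le_compat_l; lra).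
  nra.
Qed.

Lemma opt_ineq d (dom : vec d -> Prop) hv gk a p alpha : 0 < alpha -> convex_ext dom hv ->
  is_argmin dom (fun y => hv y + inner gk (vsub y a) + /(2*alpha) * norm (vsub y a)^2) p ->
  forall y, dom y -> hv p + inner gk (vsub p y) <=
    hv y + /(2*alpha) * (norm (vsub y a)^2 - norm (vsub y p)^2 - norm (vsub p a)^2).
Proof.
  intros Ha Hc [Hp Hmin] y Hy.
  set (b := vsub y p). set (e := vsub p a). set (K := /(2*alpha)).
  assert (HK : 0 < K) by (unfold K; apply Rinv_0_lt_compat; lra).
  set (A := hv y - hv p + inner gk b + 2*K*inner e b).
  assert (HA : 0 <= A).
  { apply (lim_arg A (K * inner b b)). intros t Ht.
    set (w := vadd (vscale t y) (vscale (1-t) p)).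
    destruct (Hc y p t Hy Hp) as [Hw Hhw]; [lra|]. fold w in Hw, Hhw.
    specialize (Hmin w Hw). cbv beta in Hmin.
    assert (E : vsub w a = vadd e (vscale t b)).
    { apply functional_extensionality; intro i; unfold w, e, b, vsub, vadd, vscale; ring. }
    rewrite E, !norm_sq, !inner_add_l, !inner_add_r, !inner_scale_l, !inner_scale_r in Hmin.
    rewrite (inner_sym d b e) in Hmin.
    change (vsub p a) with e in Hmin. fold K in Hmin. unfold A. clearbody w b e K A. nra. }
  assert (E1 : vsub y a = vadd b e).
  { apply functional_extensionality; intro i; unfold e, b, vsub, vadd; ring. }
  assert (E2 : inner gk (vsub p y) = - inner gk b).
  { unfold b. rewrite !inner_sub_r. ring. }
  rewrite E1, E2, !norm_sq, !inner_add_l, !inner_add_r. fold b e.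
  rewrite (inner_sym d e b). unfold A in HA. fold K. rewrite (inner_sym d b e).
  match goal with |- _ <= _ + K * ?X => replace (K * X) with (2 * K * inner e b) by ring end. lra.
Qed.

Lemma telesc d (x : nat -> vec d) k m : (m <= k)%nat ->
  norm (vsub (x (S k)) (x (k - m)%nat)) <=
  sum_f_R0 (fun i => norm (vsub (x (k - i + 1)%nat) (x (k - i)%nat))) m.
Proof.
  induction m; intros Hm; simpl.
  - replace (k - 0 + 1)%nat with (S k) by lia. replace (k - 0)%nat with k by lia. lra.
  - rewrite (vsub_split d (x (S k)) (x (k - m)%nat) (x (k - S m)%nat)).
    eapply Rle_trans; [apply norm_triangle|].
    replace (k - S m + 1)%nat with (k - m)%nat by lia.
    assert (IH := IHm ltac:(lia)). lra.
Qed.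

Lemma sq_sum (c : nat -> R) m : (sum_f_R0 c m)^2 <= (INR m + 1) * sum_f_R0 (fun i => c i ^2) m.
Proof.
  induction m. simpl. lra. cbn [sum_f_R0].
  set (S0 := sum_f_R0 c m) in *. set (Q := sum_f_R0 (fun i => c i ^2) m) in *.
  rewrite S_INR. set (u := c (S m)). set (M := INR m + 1) in *.
  assert (HM : 0 < M) by (unfold M; pose proof (pos_INR m); lra).
  assert (H2 : 2 * S0 * u <= Q + M * u * u).
  { assert (0 <= (S0 - M*u)^2) by apply pow2_ge_0.
    assert (2*S0*u*M <= S0^2 + M*M*u*u) by nra.
    assert (2*S0*u*M <= M*Q + M*M*u*u) by nra.
    apply (Rmult_le_reg_r M); auto. nra. }
  simpl in *. nra.
Qed.

Lemma sum_mono (c : nat -> R) m n : (forall i, 0 <= c i) -> (m <= n)%nat ->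
  sum_f_R0 c m <= sum_f_R0 c n.
Proof.
  intros Hc Hmn. induction Hmn. lra. simpl. pose proof (Hc (S m0)). lra.
Qed.

Lemma delay_bound d (x : nat -> vec d) k dl tau : (dl <= tau)%nat ->
  norm (vsub (x (S k)) (x (k - dl)%nat))^2 <= (INR tau + 1) *
   sum_f_R0 (fun i => if (i <=? k)%nat
                      then (norm (vsub (x (k - i + 1)%nat) (x (k - i)%nat))) ^ 2 else 0) tau.
Proof.
  intros Hdl. set (m := Nat.min dl k).
  replace (k - dl)%nat with (k - m)%nat by (unfold m; lia).
  set (c := fun i => norm (vsub (x (k - i + 1)%nat) (x (k - i)%nat))).
  pose proof (telesc d x k m ltac:(unfold m; lia)) as H1. fold c in H1.
  pose proof (norm_ge0 d (vsub (x (S k)) (x (k - m)%nat))).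
  assert (H2 : norm (vsub (x (S k)) (x (k - m)%nat))^2 <= (sum_f_R0 c m)^2).
  { simpl. rewrite !Rmult_1_r. apply Rmult_le_compat; lra. }
  pose proof (sq_sum c m) as H3.
  set (g := fun i => if (i <=? k)%nat then c i ^ 2 else 0).
  assert (Hg0 : forall i, 0 <= g i).
  { intro i; unfold g; destruct (i <=? k)%nat; [apply pow2_ge_0|lra]. }
  assert (H4 : sum_f_R0 (fun i => c i ^2) m = sum_f_R0 g m).
  { apply sum_eq. intros i Hi. unfold g. replace (i <=? k)%nat with true; auto.
    symmetry; apply Nat.leb_le; unfold m in Hi; lia. }
  assert (H5 : sum_f_R0 g m <= sum_f_R0 g tau) by (apply sum_mono; auto; unfold m; lia).
  assert (H6 : 0 <= sum_f_R0 g m) by (apply cond_pos_sum; auto).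
  assert (H7 : INR m + 1 <= INR tau + 1) by (apply Rplus_le_compat_r, le_INR; unfold m; lia).
  pose proof (pos_INR m).
  change (norm (vsub (x (S k)) (x (k - m)%nat)) ^ 2 <= (INR tau + 1) * sum_f_R0 g tau).
  rewrite H4 in H3. 
  assert ((INR m + 1) * sum_f_R0 g m <= (INR tau + 1) * sum_f_R0 g tau)
    by (apply Rmult_le_compat; lra).
  lra.
Qed.

Lemma dist_inf d (X : vec d -> Prop) x : (exists y, X y) ->
  is_inf (fun r => exists y, X y /\ r = norm (vsub x y)) (dist_set X x).
Proof.
  intros [y0 Hy0]. unfold dist_set. apply epsilon_spec.
  set (E := fun r => exists y, X y /\ r = norm (vsub x y)).
  set (E' := fun r => E (- r)).
  assert (Hb : bound E').
  { exists 0. intros r [y [_ Hr]]. pose proof (norm_ge0 d (vsub x y)). lra. }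
  assert (Hne : exists r, E' r).
  { exists (- norm (vsub x y0)). exists y0. split; auto. ring. }
  destruct (completeness E' Hb Hne) as [l [Hl1 Hl2]].
  exists (- l). split.
  - intros r Hr. assert (E' (- r)) by (unfold E'; rewrite Ropp_involutive; auto).
    specialize (Hl1 _ H). lra.
  - intros m' Hm'. assert (l <= - m').
    { apply Hl2. intros r Hr. specialize (Hm' _ Hr). lra. }
    lra.
Qed.

Lemma dist_ge0 d (X : vec d -> Prop) x : (exists y, X y) -> 0 <= dist_set X x.
Proof.
  intros H. destruct (dist_inf d X x H) as [_ H2]. apply H2.
  intros r [y [_ Hr]]. subst. apply norm_ge0.
Qed.

Lemma inner_vsum_S d N (v : nat -> vec d) w :
  inner (vsum (S N) v) w = inner (vsum N v) w + inner (v N) w.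
Proof.
  rewrite <- inner_add_l. f_equal.
Qed.

Lemma inner_vsum_0 d (v : nat -> vec d) w : inner (vsum 0 v) w = 0.
Proof.
  unfold inner, vsum. rewrite <- (fsum_0 d). apply fsum_ext; intros; simpl; ring.
Qed.

Theorem mainTheorem3 (d N tau : nat) (f : nat -> vec d -> R) (gf : nat -> vec d -> vec d)
  (Ln : nat -> R) (domh : vec d -> Prop) (hv : vec d -> R)
  (delay : nat -> nat -> nat) (alpha beta Phistar : R) (x : nat -> vec d) :
  (* A1 *)
  (forall n, (n < N)%nat ->
     convex_fun (f n) /\ is_gradient (f n) (gf n) /\
     (forall y z, norm (vsub (gf n y) (gf n z)) <= Ln n * norm (vsub y z))) ->
  (* A2 *)
  proper_h domh -> closed_ext domh hv -> convex_ext domh hv -> subdiff_nonempty domh hv ->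
  (* A3 *)
  (forall k n, (n < N)%nat -> (delay k n <= tau)%nat) ->
  (* A4: Phistar is the minimal value of Phi, attained (X nonempty), quadratic growth *)
  (exists xs, domh xs /\ Phi N f hv xs = Phistar) ->
  (forall y, domh y -> Phistar <= Phi N f hv y) ->
  0 < beta ->
  (forall y, domh y ->
     Phi N f hv y - Phistar >= beta / 2 * (dist_set (Xset N f domh hv Phistar) y) ^ 2) ->
  (* step size and PIAG iterates *)
  0 < alpha ->
  (forall k, piag_step N gf delay domh hv alpha x k) ->
  forall k, domh (x k) ->
    Psi N f domh hv Phistar alpha (x (S k)) <=
      (1 - alpha * beta / (1 + alpha * beta)) * Psi N f domh hv Phistar alpha (x k)
      - / (2 * alpha) * (norm (vsub (x (S k)) (x k))) ^ 2
      + sumR N Ln * (INR tau + 1) / 2 *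
        sum_f_R0 (fun i => if (i <=? k)%nat
                           then (norm (vsub (x (k - i + 1)%nat) (x (k - i)%nat))) ^ 2
                           else 0) tau.
Proof.
  intros HA1 Hprop Hclosed Hconv Hsub Hdel Hex Hmin Hbeta Hqg Halpha Hstep k Hdk.
  set (SS := sum_f_R0 (fun i => if (i <=? k)%nat
                           then (norm (vsub (x (k - i + 1)%nat) (x (k - i)%nat))) ^ 2
                           else 0) tau).
  set (X := Xset N f domh hv Phistar).
  assert (HXne : exists y, X y) by (destruct Hex as [xs Hxs]; exists xs; exact Hxs).
  set (a := x k). set (p := x (S k)).
  set (K := / (2 * alpha)).
  assert (HK : 0 < K) by (unfold K; apply Rinv_0_lt_compat; lra).
  set (Kt := sumR N Ln * (INR tau + 1) / 2 * SS).
  pose proof (Hstep k) as Hpk. unfold piag_step in Hpk. cbv zeta in Hpk.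
  set (gk := vsum N (fun n => gf n (x (k - delay k n)%nat))) in Hpk.
  assert (Hdp : domh p) by (destruct Hpk; auto).
  assert (HS0 : 0 <= SS).
  { apply cond_pos_sum. intro i. destruct (i <=? k)%nat; [apply pow2_ge_0|lra]. }
  assert (Hn : forall n y, (n < N)%nat ->
     f n p <= f n y + inner (gf n (x (k - delay k n)%nat)) (vsub p y) + Ln n * (INR tau + 1) / 2 * SS).
  { intros n y Hlt. destruct (HA1 n Hlt) as [Hc [Hg HL]].
    set (z := x (k - delay k n)%nat).
    pose proof (descent d (f n) (gf n) (Ln n) Hg HL z p) as HD.
    pose proof (grad_convex d (f n) (gf n) Hc Hg z y) as HC.
    assert (E : inner (gf n z) (vsub p y) = inner (gf n z) (vsub p z) - inner (gf n z) (vsub y z))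
      by (rewrite !inner_sub_r; ring).
    assert (HB : Ln n / 2 * norm (vsub p z) ^ 2 <= Ln n * (INR tau + 1) / 2 * SS).
    { destruct (Rle_dec 0 (Ln n)) as [HLn|HLn].
      - pose proof (delay_bound d x k (delay k n) tau (Hdel k n Hlt)) as Hdb. fold SS in Hdb.
        unfold p, z. nra.
      - apply Rnot_le_lt in HLn.
        assert (Hz : forall u w : vec d, norm (vsub u w) = 0).
        { intros u w. pose proof (HL u w). pose proof (norm_ge0 d (vsub u w)).
          pose proof (norm_ge0 d (vsub (gf n u) (gf n w))). nra. }
        assert (SS = 0).
        { unfold SS. rewrite (sum_eq _ (fun _ => 0)).
          - rewrite sum_cte. ring.
          - intros i _. destruct (i <=? k)%nat; auto. rewrite Hz. ring. }
        rewrite Hz. replace SS with 0. lra. }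
    lra. }
  assert (HF : forall y M, (M <= N)%nat ->
    sumR M (fun n => f n p) <= sumR M (fun n => f n y)
      + inner (vsum M (fun n => gf n (x (k - delay k n)%nat))) (vsub p y)
      + sumR M Ln * (INR tau + 1) / 2 * SS).
  { intros y M. induction M; intros HM.
    - simpl. rewrite inner_vsum_0. lra.
    - simpl sumR. rewrite inner_vsum_S.
      pose proof (Hn M y ltac:(lia)). pose proof (IHM ltac:(lia)). lra. }
  assert (Hkey : forall y, X y ->
    Psi N f domh hv Phistar alpha p + K * norm (vsub p a) ^ 2 - Kt <= K * norm (vsub a y) ^ 2).
  { intros y [Hdy HPy].
    pose proof (opt_ineq d domh hv gk a p alpha Halpha Hconv Hpk y Hdy) as HO. fold K in HO.
    pose proof (HF y N (le_n N)) as HFN. fold gk in HFN. fold Kt in HFN.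
    assert (HPp : Phi N f hv p - Phistar <=
       K * (norm (vsub y a) ^ 2 - norm (vsub y p) ^ 2 - norm (vsub p a) ^ 2) + Kt).
    { rewrite <- HPy. unfold Phi, FF. lra. }
    destruct (dist_inf d X p HXne) as [Hi1 _].
    assert (Hdpy : dist_set X p <= norm (vsub p y)) by (apply Hi1; exists y; split; auto; split; auto).
    pose proof (dist_ge0 d X p HXne).
    assert (dist_set X p ^ 2 <= norm (vsub y p) ^ 2).
    { rewrite (vsub_sym_norm d y p). simpl. rewrite !Rmult_1_r. apply Rmult_le_compat; lra. }
    unfold Psi. fold X. rewrite (vsub_sym_norm d a y).
    assert (K * dist_set X p ^ 2 <= K * norm (vsub y p) ^ 2) by (apply Rmult_le_compat_l; lra).
    fold K. lra. }
  set (c := Psi N f domh hv Phistar alpha p + K * norm (vsub p a) ^ 2 - Kt) in Hkey.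
  pose proof (dist_ge0 d X a HXne) as Hda0.
  assert (Hc : c <= K * dist_set X a ^ 2).
  { destruct (Rle_dec c 0). { pose proof (pow2_ge_0 (dist_set X a)). nra. }
    apply Rnot_le_lt in n.
    destruct (dist_inf d X a HXne) as [_ Hi2].
    assert (Hs : sqrt (c / K) <= dist_set X a).
    { apply Hi2. intros r [y [Hy Hr]]. subst r.
      rewrite <- (sqrt_pow2 (norm (vsub a y))) by apply norm_ge0.
      apply sqrt_le_1_alt. specialize (Hkey y Hy).
      apply (Rmult_le_reg_l K); auto. unfold Rdiv. rewrite <- Rmult_assoc.
      rewrite (Rmult_comm K c), Rmult_assoc, Rinv_r, Rmult_1_r by lra. lra. }
    assert (Hcp : 0 <= c / K) by (apply Rlt_le, Rdiv_lt_0_compat; lra).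
    pose proof (sqrt_pos (c / K)).
    assert (H1 : c / K <= dist_set X a ^ 2).
    { rewrite <- (pow2_sqrt (c / K)) by auto. simpl. rewrite !Rmult_1_r. apply Rmult_le_compat; lra. }
    apply (Rmult_le_compat_l K) in H1; [|lra].
    unfold Rdiv in H1. rewrite <- Rmult_assoc, (Rmult_comm K c), Rmult_assoc, Rinv_r, Rmult_1_r in H1 by lra.
    exact H1. }
  set (r := 1 - alpha * beta / (1 + alpha * beta)).
  assert (Hr : 0 <= r).
  { unfold r. assert (alpha * beta / (1 + alpha * beta) <= 1).
    { apply (Rmult_le_reg_r (1 + alpha*beta)). nra. unfold Rdiv.
      rewrite Rmult_assoc, Rinv_l by nra. nra. }
    lra. }
  set (D := dist_set X a) in *.
  set (Q := Phi N f hv a - Phistar).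
  assert (HQ : Q >= beta / 2 * D ^ 2) by (apply Hqg; auto).
  assert (HPa : Psi N f domh hv Phistar alpha a = Q + K * D ^ 2) by reflexivity.
  assert (Hid : r * (Q + K * D ^ 2) - K * D ^ 2 = r * (Q - beta / 2 * D ^ 2)).
  { unfold r, K. field. split; nra. }
  assert (0 <= r * (Q - beta / 2 * D ^ 2)) by (apply Rmult_le_pos; lra).
  rewrite HPa. fold p a Kt K. unfold c in Hc. lra.
Qed.
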